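(* Let $X=X_1\times X_2$ be as in the context. For $j=1,2$ let $-\mathbf{A}_j:\mathrm{dom}(\mathbf{A}_j)\subset X_j\to X_j$ be generators of strongly continuous contraction semigroups, and let $\mathbf{B}_1:X_2\to X_1$, $\mathbf{B}_2:X_1\to X_2$ be bounded. Assume moreover that $\mathcal{A}$ and $\mathcal{C}$ are boundedly invertible. Then there is a constant $C_2=C_2(\|\mathcal{A}^{-1}\|,\|\mathcal{A}^{-1}\mathcal{B}\|)>0$ such that for all $\tau>0$, \[ \|\mathcal{A}^{-1}(\mathcal{T}(\tau)-\mathrm{e}^{-\tau\mathcal{C}})\|\le C_2\,(1+\mathrm{e}^{\tau\|\mathcal{B}\|})\,\tau. \]
   Context: $X=X_1\times X_2$ for Banach spaces $X_1,X_2$, with norm $\|(x,y)\|^2=\|x\|_{X_1}^2+\|y\|_{X_2}^2$. For $\tau\ge0$ set $\mathbf{E}_j(\tau)=\mathrm{e}^{-\tau\mathbf{A}_j}$ and $\mathbf{X}_j(\tau)=\int_0^\tau \mathrm{e}^{-\sigma\mathbf{A}_j}\,\mathrm{d}\sigma\,\mathbf{B}_j$ (strong integral). The split-step operator on $X$ is \[ \mathcal{T}(\tau)=\begin{pmatrix}\mathbf{E}_1(\tau) & \mathbf{X}_1(\tau)\\ \mathbf{X}_2(\tau)\mathbf{E}_1(\tau) & \mathbf{X}_2(\tau)\mathbf{X}_1(\tau)+\mathbf{E}_2(\tau)\end{pmatrix}. \] $\mathcal{A}=\mathrm{diag}(\mathbf{A}_1,\mathbf{A}_2)$ on $\mathrm{dom}(\mathcal{A})=\mathrm{dom}(\mathbf{A}_1)\times\mathrm{dom}(\mathbf{A}_2)$;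 $\mathcal{B}=\begin{pmatrix}0&\mathbf{B}_1\\\mathbf{B}_2&0\end{pmatrix}$ (bounded on $X$, $\|\mathcal{B}\|$ its operator norm on $X$); $\mathcal{C}=\mathcal{A}-\mathcal{B}$ with $\mathrm{dom}(\mathcal{C})=\mathrm{dom}(\mathcal{A})$, so $-\mathcal{C}$ generates the strongly continuous semigroup $(\mathrm{e}^{-t\mathcal{C}})_{t\ge0}$. *)

(* Defs.v *)
From HB Require Import structures.
From mathcomp Require Import all_boot all_order all_algebra.
From mathcomp Require Import all_classical all_reals all_analysis.
Set Implicit Arguments. Unset Strict Implicit. Unset Printing Implicit Defensive.
Import Order.TTheory GRing.Theory Num.Theory.
Import numFieldNormedType.Exports.
Local Open Scope classical_set_scope.
Local Open Scope ring_scope.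

Definition is_linear (R : realType) (U V : normedModType R) (f : U -> V) :=
  forall (a : R) (x y : U), f (a *: x + y) = a *: f x + f y.

(* Strongly continuous semigroup (only t >= 0 matters). *)
Definition C0_semigroup (R : realType) (V : normedModType R) (T : R -> V -> V) :=
  [/\ forall t, 0 <= t -> is_linear (T t),
      forall x, T 0 x = x,
      forall s t x, 0 <= s -> 0 <= t -> T (s + t) x = T s (T t x),
      forall t, 0 <= t -> exists M : R, forall y, `|T t y| <= M * `|y|
    & forall x, T t x @[t --> 0^'+] --> x].

Definition contraction_C0_semigroup (R : realType) (V : normedModType R)
  (T : R -> V -> V) :=
  C0_semigroup T /\ forall t x, 0 <= t -> `|T t x| <= `|x|.

Definition generates (R : realType) (V : normedModType R) (T : R -> V -> V)
  (D : set V) (G : V -> V) :=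
  forall x, (D x <-> cvg ((t^-1 *: (T t x - x)) @[t --> 0^'+])) /\
            (D x -> (t^-1 *: (T t x - x)) @[t --> 0^'+] --> G x).

Definition Rint (R : realType) (V : normedModType R) (f : R -> V) (a b : R) : V :=
  lim ((fun n : nat => ((b - a) / n.+1%:R) *:
          \sum_(i < n.+1) f (a + i%:R * (b - a) / n.+1%:R)) @ \oo).

Definition norm2 (R : realType) (V1 V2 : normedModType R) (p : V1 * V2) : R :=
  Num.sqrt (`|p.1| ^+ 2 + `|p.2| ^+ 2).

Definition opnorm2 (R : realType) (V1 V2 : normedModType R)
  (f : V1 * V2 -> V1 * V2) : R :=
  sup [set norm2 (f v) | v in [set v : V1 * V2 | norm2 v <= 1]].

Definition bounded_linear2 (R : realType) (V1 V2 : normedModType R)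
  (f : V1 * V2 -> V1 * V2) :=
  is_linear f /\ exists M : R, forall v, norm2 (f v) <= M * norm2 v.

Definition bounded_inverse (R : realType) (V1 V2 : normedModType R)
  (D : set (V1 * V2)) (G : V1 * V2 -> V1 * V2) (K : V1 * V2 -> V1 * V2) :=
  [/\ bounded_linear2 K,
      forall v, D (K v) /\ G (K v) = v
    & forall v, D v -> K (G v) = v].

Definition Xop (R : realType) (U V : normedModType R) (E : R -> V -> V)
  (B : U -> V) (tau : R) (z : U) : V :=
  Rint (fun s => E s (B z)) 0 tau.

Definition split_step (R : realType) (V1 V2 : normedModType R)
  (E1 : R -> V1 -> V1) (E2 : R -> V2 -> V2) (B1 : V2 -> V1) (B2 : V1 -> V2)
  (tau : R) (v : V1 * V2) : V1 * V2 :=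
  (E1 tau v.1 + Xop E1 B1 tau v.2,
   Xop E2 B2 tau (E1 tau v.1) + Xop E2 B2 tau (Xop E1 B1 tau v.2) + E2 tau v.2).

(* Main.v *)
Require Import Defs.
From HB Require Import structures.
From mathcomp Require Import all_boot all_order all_algebra.
From mathcomp Require Import all_classical all_reals all_analysis.
From mathcomp Require Import ring lra.
Import Order.TTheory GRing.Theory Num.Theory.
Import numFieldNormedType.Exports.
Local Open Scope classical_set_scope.
Local Open Scope ring_scope.
Set Implicit Arguments. Unset Strict Implicit. Unset Printing Implicit Defensive.
Section Basics.
Variable R : realType.

Lemma near_right0P (P : R -> Prop) :
  (\forall t \near 0^'+, P t) <-> exists2 d : R, 0 < d & forall t, 0 < t < d -> P t.
Proof.
rewrite near_withinE; split.
- move=> /nbhs_ballP [e e0 H]; exists e => // t /andP[t0 te]; apply: H => //.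
  by rewrite /ball /= sub0r normrN gtr0_norm.
- move=> [d d0 H]; apply/nbhs_ballP; exists d => // t; rewrite /ball /= sub0r normrN => td t0.
  apply: H; rewrite t0 /=. by rewrite gtr0_norm in td.
Qed.

Definition rlim (V : normedModType R) (f : R -> V) (l : V) :=
  forall e, 0 < e -> exists2 d, 0 < d & forall t, 0 < t < d -> `|f t - l| <= e.

Lemma rlimP (V : normedModType R) (f : R -> V) l : f @ 0^'+ --> l <-> rlim f l.
Proof.
rewrite cvgrPdistC_le; split.
- move=> H e e0; have /near_right0P[d d0 Hd] := H e e0; by exists d.
- move=> H e e0; apply/near_right0P; have [d d0 Hd] := H e e0; by exists d.
Qed.

Section Lin.
Variables (U V : normedModType R) (f : U -> V) (hf : is_linear f).
Lemma lin0 : f 0 = 0.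
Proof.
have h := hf 1 0 0; rewrite scale1r addr0 scale1r in h.
by apply: (@addrI _ (f 0)); rewrite addr0 -h.
Qed.
Lemma linD x y : f (x + y) = f x + f y.
Proof. by have := hf 1 x y; rewrite !scale1r. Qed.
Lemma linZ a x : f (a *: x) = a *: f x.
Proof. by have := hf a x 0; rewrite !addr0 lin0 addr0. Qed.
Lemma linN x : f (- x) = - f x.
Proof. by rewrite -scaleN1r linZ scaleN1r. Qed.
Lemma linB x y : f (x - y) = f x - f y.
Proof. by rewrite linD linN. Qed.
Lemma linsum n (F : nat -> U) : f (\sum_(i < n) F i) = \sum_(i < n) f (F i).
Proof.
elim: n => [|n IH]; first by rewrite !big_ord0 lin0.
by rewrite !big_ord_recr /= linD IH.
Qed.
End Lin.

Section Norm2.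
Variables (V1 V2 : normedModType R).
Implicit Types p q : V1 * V2.

Lemma norm2_ge0 p : 0 <= norm2 p.
Proof. exact: sqrtr_ge0. Qed.

Lemma norm2_le p x : 0 <= x -> `|p.1| ^+ 2 + `|p.2| ^+ 2 <= x ^+ 2 -> norm2 p <= x.
Proof.
move=> x0 h; rewrite /norm2 -(ger0_norm x0) -sqrtr_sqr; exact: ler_wsqrtr.
Qed.

Lemma norm2_ge1 p : `|p.1| <= norm2 p.
Proof.
have e : `|p.1| = Num.sqrt (`|p.1| ^+ 2) by rewrite sqrtr_sqr normr_id.
rewrite {1}e /norm2; apply: ler_wsqrtr; by rewrite lerDl sqr_ge0.
Qed.
Lemma norm2_ge2 p : `|p.2| <= norm2 p.
Proof.
have e : `|p.2| = Num.sqrt (`|p.2| ^+ 2) by rewrite sqrtr_sqr normr_id.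
rewrite {1}e /norm2; apply: ler_wsqrtr; by rewrite lerDr sqr_ge0.
Qed.

Lemma norm2_le_sum p : norm2 p <= `|p.1| + `|p.2|.
Proof.
apply: norm2_le; first by rewrite addr_ge0.
have h1 := normr_ge0 p.1; have h2 := normr_ge0 p.2; nra.
Qed.

Lemma norm_le_norm2 p : `|p| <= norm2 p.
Proof.
have -> : `|p| = Num.max `|p.1| `|p.2| by [].
by rewrite ge_max norm2_ge1 norm2_ge2.
Qed.

Lemma norm2_le_norm p : norm2 p <= 2 * `|p|.
Proof.
apply: (le_trans (norm2_le_sum p)).
have pn : `|p| = Num.max `|p.1| `|p.2| by [].
have h1 : `|p.1| <= `|p| by rewrite pn le_max lexx.
have h2 : `|p.2| <= `|p| by rewrite pn le_max lexx orbT.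
lra.
Qed.

Lemma norm2_mono p q : `|p.1| <= `|q.1| -> `|p.2| <= `|q.2| -> norm2 p <= norm2 q.
Proof.
move=> h1 h2; apply: norm2_le; first exact: norm2_ge0.
rewrite /norm2 sqr_sqrtr; last by rewrite addr_ge0 // sqr_ge0.
have g1 := normr_ge0 p.1; have g2 := normr_ge0 p.2; nra.
Qed.

Lemma norm2_triangle p q : norm2 (p + q) <= norm2 p + norm2 q.
Proof.
apply: norm2_le; first by rewrite addr_ge0 // norm2_ge0.
have e1 : `|(p + q).1| <= `|p.1| + `|q.1| by exact: ler_normD.
have e2 : `|(p + q).2| <= `|p.2| + `|q.2| by exact: ler_normD.
set x1 := `|p.1| in e1 *; set x2 := `|p.2| in e2 *.
set y1 := `|q.1| in e1 *; set y2 := `|q.2| in e2 *.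
set a1 := `|(p + q).1| in e1 *; set a2 := `|(p + q).2| in e2 *.
have X2 : norm2 p ^+ 2 = x1 ^+ 2 + x2 ^+ 2 by rewrite /norm2 sqr_sqrtr // addr_ge0 // sqr_ge0.
have Y2 : norm2 q ^+ 2 = y1 ^+ 2 + y2 ^+ 2 by rewrite /norm2 sqr_sqrtr // addr_ge0 // sqr_ge0.
have X0 := norm2_ge0 p; have Y0 := norm2_ge0 q.
set X := norm2 p in X2 X0 *; set Y := norm2 q in Y2 Y0 *.
have ga1 : 0 <= a1 by exact: normr_ge0.
have ga2 : 0 <= a2 by exact: normr_ge0.
have gx1 : 0 <= x1 by exact: normr_ge0.
have gx2 : 0 <= x2 by exact: normr_ge0.
have gy1 : 0 <= y1 by exact: normr_ge0.
have gy2 : 0 <= y2 by exact: normr_ge0.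
have CS : (x1 * y1 + x2 * y2) ^+ 2 <= (X * Y) ^+ 2.
  rewrite exprMn X2 Y2.
  have : 0 <= (x1 * y2 - x2 * y1) ^+ 2 by exact: sqr_ge0.
  move=> h; nra.
have CS' : x1 * y1 + x2 * y2 <= X * Y.
  have XY0 : 0 <= X * Y by exact: mulr_ge0.
  nra.
have s1 : a1 ^+ 2 <= (x1 + y1) ^+ 2 by nra.
have s2 : a2 ^+ 2 <= (x2 + y2) ^+ 2 by nra.
nra.
Qed.

Lemma norm2Z (a : R) p : norm2 (a *: p) = `|a| * norm2 p.
Proof.
rewrite /norm2 /= !normrZ !exprMn -mulrDr sqrtrM ?sqr_ge0 // sqrtr_sqr normr_id //.
Qed.

Lemma norm2N p : norm2 (- p) = norm2 p.
Proof. by rewrite -scaleN1r norm2Z normrN1 mul1r. Qed.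

Lemma norm2B p q : norm2 (p - q) <= norm2 p + norm2 q.
Proof. by apply: (le_trans (norm2_triangle _ _)); rewrite norm2N. Qed.

Lemma norm2_0 : norm2 (0 : V1 * V2) = 0.
Proof. by rewrite /norm2 /= !normr0 expr0n /= add0r sqrtr0. Qed.

Lemma norm2_eq0 p : norm2 p = 0 -> p = 0.
Proof.
move=> h; have := norm2_ge1 p; have := norm2_ge2 p; rewrite h => h2 h1.
case: p h1 h2 h => a b /= h1 h2 _.
have -> : a = 0 by apply: normr0_eq0; apply/eqP; rewrite eq_le h1 normr_ge0.
have -> : b = 0 by apply: normr0_eq0; apply/eqP; rewrite eq_le h2 normr_ge0.
by [].
Qed.

Lemma norm2_sum n (F : nat -> V1 * V2) :
  norm2 (\sum_(i < n) F i) <= \sum_(i < n) norm2 (F i).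
Proof.
elim: n => [|n IH]; first by rewrite !big_ord0 norm2_0.
rewrite !big_ord_recr /=; apply: (le_trans (norm2_triangle _ _)).
by rewrite lerD2r.
Qed.

End Norm2.
End Basics.
Section Semi.
Variable R : realType.
Lemma andPi (a b : bool) : a -> b -> a && b. Proof. by move=> -> ->. Qed.

Lemma rlim_unique (V : normedModType R) (f : R -> V) l1 l2 :
  rlim f l1 -> rlim f l2 -> l1 = l2.
Proof.
move=> h1 h2; apply/eqP; rewrite -subr_eq0 -normr_eq0 eq_le normr_ge0 andbT.
apply/ler_addgt0Pr => e e0; rewrite add0r.
have e20 : 0 < e / 2 by rewrite divr_gt0.
have [d1 d10 H1] := h1 _ e20; have [d2 d20 H2] := h2 _ e20.
pose t := Num.min d1 d2 / 2.
have t0 : 0 < t by rewrite divr_gt0 // lt_min d10 d20.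
have td1 : t < d1.
  rewrite /t; have : Num.min d1 d2 <= d1 by rewrite ge_min lexx.
  have : 0 < Num.min d1 d2 by rewrite lt_min d10 d20. lra.
have td2 : t < d2.
  rewrite /t; have : Num.min d1 d2 <= d2 by rewrite ge_min lexx orbT.
  have : 0 < Num.min d1 d2 by rewrite lt_min d10 d20. lra.
have a1 := H1 t; have a2 := H2 t.
rewrite t0 td1 /= in a1; rewrite t0 td2 /= in a2.
have -> : l1 - l2 = (f t - l2) - (f t - l1) by rewrite opprB [RHS]addrC addrA subrK.
apply: (le_trans (ler_normB _ _)); lra.
Qed.

Lemma rlim_cvg (V : normedModType R) (f : R -> V) l : rlim f l -> cvg (f @ 0^'+).
Proof. by move=> /rlimP h; apply/cvg_ex; exists l. Qed.

Section Gen.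
Variables (V : normedModType R) (T : R -> V -> V) (D : set V) (G : V -> V).
Hypothesis hG : generates T D G.
Local Notation q x := (fun t : R => t^-1 *: (T t x - x)).

Lemma gen_rlim x : D x -> rlim (q x) (G x).
Proof. by move=> Dx; apply/rlimP; exact: (proj2 (hG x) Dx). Qed.

Lemma gen_dom x l : rlim (q x) l -> D x /\ G x = l.
Proof.
move=> h; have Dx : D x by apply/(proj1 (hG x)); exact: rlim_cvg h.
split => //; exact: rlim_unique (gen_rlim Dx) h.
Qed.

Hypothesis hT : C0_semigroup T.

Lemma sg_lin t : 0 <= t -> is_linear (T t).
Proof. by case: hT => h _ _ _ _; exact: h. Qed.

Lemma sg_add s t x : 0 <= s -> 0 <= t -> T (s + t) x = T s (T t x).
Proof. by case: hT => _ _ h _ _; exact: h. Qed.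

Lemma sg_bnd t : 0 <= t -> exists2 M : R, 0 < M & forall y, `|T t y| <= M * `|y|.
Proof.
case: hT => _ _ _ h _ t0; have [M HM] := h t t0.
exists (`|M| + 1); first by rewrite ltr_pwDr // normr_ge0.
move=> y; apply: (le_trans (HM y)); apply: ler_wpM2r; first exact: normr_ge0.
by apply: (le_trans (ler_norm M)); rewrite lerDl.
Qed.

Lemma sg_zero x : T 0 x = x.
Proof. by case: hT => _ h _ _ _; exact: h. Qed.

Lemma sg_cont x : rlim (fun t => T t x) x.
Proof. by case: hT => _ _ _ _ h; apply/rlimP; exact: h. Qed.

Lemma sg_comm s x : 0 <= s -> D x -> D (T s x) /\ G (T s x) = T s (G x).
Proof.
move=> s0 Dx; apply: gen_dom.
have [M M0 HM] := sg_bnd s0.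
have lin := sg_lin s0.
move=> e e0.
have eM : 0 < e / M by rewrite divr_gt0.
have [d d0 Hd] := gen_rlim Dx eM.
exists d => // t /andP[t0 td].
have -> : T t (T s x) = T s (T t x) by rewrite -sg_add ?(ltW t0) // -sg_add ?(ltW t0) // addrC.
rewrite -(linB lin) -(linZ lin) -(linB lin).
apply: (le_trans (HM _)).
have := Hd t; rewrite t0 td => /(_ isT) h.
have -> : e = M * (e / M) by rewrite mulrC divfK // gt_eqF.
by apply: ler_wpM2l => //; exact: ltW.
Qed.

End Gen.

Lemma dini (F : R -> R) (t : R) : 0 <= t -> F 0 <= 0 ->
  (forall s, 0 < s <= t -> forall e, 0 < e -> exists2 d, 0 < d &
      forall r, s - d < r < s -> 0 <= r -> F s <= F r + e) ->
  (forall s, 0 <= s < t -> forall e, 0 < e -> exists2 d, 0 < d &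
      forall h, 0 < h < d -> s + h <= t -> F (s + h) <= F s + e * h) ->
  F t <= 0.
Proof.
move=> t0 F0 Hl Hr.
suff H : forall eps, 0 < eps -> F t <= eps * t.
  apply/ler_addgt0Pr => e e0; rewrite add0r.
  case: (ltrgt0P t) => [tp||tz].
  - have := H (e / t) (divr_gt0 e0 tp); by rewrite divfK ?gt_eqF.
  - by move=> tn; move: (lt_le_trans tn t0); rewrite ltxx.
  - by rewrite tz; apply: (le_trans F0); exact: ltW.
move=> eps eps0.
pose A := [set s | 0 <= s <= t /\ forall r, 0 <= r <= s -> F r <= eps * r].
have A0 : A 0.
  split; first by rewrite lexx t0.
  move=> r /andP[r0 r0']; have -> : r = 0 by apply/eqP; rewrite eq_le r0 r0'.
  by rewrite mulr0.
have An : A !=set0 by exists 0.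
have Aub : ubound A t by move=> s [/andP[_ ->]].
have hs : has_sup A by split => //; exists t.
set s := sup A.
have s0 : 0 <= s by apply: sup_upper_bound.
have st : s <= t by apply: ge_sup.
have i1 : forall r, 0 <= r < s -> F r <= eps * r.
  move=> r /andP[r0 rs]; have [a [_ Ha] ra] := sup_gt An rs.
  by apply: Ha; rewrite r0 ltW.
have i2 : F s <= eps * s.
  case: (ltrgt0P s) => [sp||sz].
  - apply/ler_addgt0Pr => e e0.
    have [d d0 Hd] := Hl s (andPi sp st) e e0.
    pose r := s - Num.min d s / 2.
    have m0 : 0 < Num.min d s by rewrite lt_min d0 sp.
    have m1 : Num.min d s <= d by rewrite ge_min lexx.
    have m2 : Num.min d s <= s by rewrite ge_min lexx orbT.
    have r0 : 0 <= r by rewrite /r; lra.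
    have rs : r < s by rewrite /r; lra.
    have rd : s - d < r by rewrite /r; lra.
    have := Hd r; rewrite rd rs => /(_ isT r0) h1.
    have h2 := i1 r (andPi r0 rs).
    have : eps * r <= eps * s by apply: ler_wpM2l; [exact: ltW | exact: ltW].
    lra.
  - by move=> sn; move: (lt_le_trans sn s0); rewrite ltxx.
  - by rewrite sz mulr0.
have As : A s.
  split; first by rewrite s0 st.
  move=> r /andP[r0 rs]; case: (ltgtP r s) => [rs'|sr|->].
  - by apply: i1; rewrite r0 rs'.
  - by move: rs; rewrite leNgt sr.
  - exact: i2.
have : s = t.
  apply/eqP; rewrite eq_le st /=; rewrite leNgt; apply/negP => slt.
  have [d d0 Hd] := Hr s (andPi s0 slt) eps eps0.
  pose h := Num.min (d / 2) (t - s).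
  have h0 : 0 < h by rewrite lt_min divr_gt0 // subr_gt0.
  have h1 : h <= d / 2 by rewrite ge_min lexx.
  have h2 : h <= t - s by rewrite ge_min lexx orbT.
  have Ash : A (s + h).
    split; first by apply/andP; split; lra.
    move=> r /andP[r0 rsh]; case: (lerP r s) => rs.
    - by case: As => _; apply; rewrite r0.
    - have := Hd (r - s); rewrite subr_gt0 rs /=.
      have rsd : r - s < d by lra.
      rewrite rsd => /(_ isT); rewrite addrC subrK => /(_ ltac:(lra)) hh.
      have := i2; have : eps * (r - s) + eps * s = eps * r by rewrite -mulrDr subrK.
      lra.
  have := sup_upper_bound hs Ash; rewrite -/s; lra.
by move=> <-; exact: i2.
Qed.

End Semi.
Section Opn.
Variables (R : realType) (V1 V2 : normedModType R).

Lemma opnorm2_ub (f : V1 * V2 -> V1 * V2) K :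
  (forall v, norm2 v <= 1 -> norm2 (f v) <= K) -> opnorm2 f <= K.
Proof.
move=> H; apply: ge_sup.
  by exists (norm2 (f 0)), 0 => //=; rewrite norm2_0 ler01.
by move=> _ [v /= v1 <-]; exact: H.
Qed.

Lemma opnorm2_prop (f : V1 * V2 -> V1 * V2) : is_linear f ->
  (exists M : R, forall v, norm2 (f v) <= M * norm2 v) ->
  0 <= opnorm2 f /\ forall v, norm2 (f v) <= opnorm2 f * norm2 v.
Proof.
move=> lf [M HM].
set S := [set norm2 (f v) | v in [set v : V1 * V2 | norm2 v <= 1]].
have S0 : S (norm2 (f 0)) by exists 0 => //=; rewrite norm2_0 ler01.
have hs : has_sup S.
  split; first by exists (norm2 (f 0)).
  exists `|M| => _ [v /= v1 <-]; apply: (le_trans (HM v)).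
  apply: (le_trans (ler_norm _)); rewrite normrM (ger0_norm (norm2_ge0 v)).
  by rewrite -[X in _ <= X]mulr1 ler_wpM2l.
have ub := sup_upper_bound hs.
have g0 : 0 <= opnorm2 f.
  by have := ub _ S0; rewrite (lin0 lf) norm2_0.
split => // v.
have [/eqP|nz] := eqVneq (norm2 v) 0.
  by move=> /eqP /norm2_eq0 ->; rewrite (lin0 lf) norm2_0 mulr0.
have np : 0 < norm2 v by rewrite lt_neqAle eq_sym nz norm2_ge0.
have Su : S (norm2 (f ((norm2 v)^-1 *: v))).
  exists ((norm2 v)^-1 *: v) => //=.
  by rewrite norm2Z ger0_norm ?invr_ge0 ?norm2_ge0 // mulVf.
have := ub _ Su; rewrite (linZ lf) norm2Z ger0_norm ?invr_ge0 ?norm2_ge0 //.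
by rewrite ler_pdivrMl // mulrC.
Qed.

End Opn.
Section Tele.
Variables (R : realType) (V1 V2 : normedModType R).

Lemma fst_sum n (F : nat -> V1 * V2) : (\sum_(i < n) F i).1 = \sum_(i < n) (F i).1.
Proof. elim: n => [|n IH]; first by rewrite !big_ord0. by rewrite !big_ord_recr /= IH. Qed.
Lemma snd_sum n (F : nat -> V1 * V2) : (\sum_(i < n) F i).2 = \sum_(i < n) (F i).2.
Proof. elim: n => [|n IH]; first by rewrite !big_ord0. by rewrite !big_ord_recr /= IH. Qed.

Definition RS (T : R -> V1 * V2 -> V1 * V2) (tau : R) (w : V1 * V2) (n : nat) :=
  ((tau - 0) / n.+1%:R) *: \sum_(i < n.+1) T (0 + i%:R * (tau - 0) / n.+1%:R) w.

Variables (T : R -> V1 * V2 -> V1 * V2) (tau K : R).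
Hypotheses (tau0 : 0 < tau) (Tlin : forall s, 0 <= s -> is_linear (T s))
  (Tadd : forall s t x, 0 <= s -> 0 <= t -> T (s + t) x = T s (T t x))
  (T0 : forall x, T 0 x = x)
  (TK : forall s u, 0 <= s <= tau -> norm2 (T s u) <= K * norm2 u).



Lemma RS_bound (w : V1 * V2) n : 0 <= K -> norm2 (RS T tau w n) <= tau * K * norm2 w.
Proof.
move=> K0; have ns := norm2_sum n.+1 (fun i : nat => T (0 + i%:R * (tau - 0) / n.+1%:R) w).
rewrite /RS norm2Z; rewrite subr0 in ns *; rewrite ger0_norm; last by rewrite divr_ge0 // ltW.
have N0 : 0 < n.+1%:R :> R by rewrite ltr0n.
apply: (le_trans (ler_wpM2l _ ns)); first by rewrite divr_ge0 ?ltW.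
apply: (@le_trans _ _ (tau / n.+1%:R * \sum_(i < n.+1) (K * norm2 w))).
  apply: ler_wpM2l; first by rewrite divr_ge0 ?ltW.
  apply: ler_sum => i _; apply: TK; rewrite add0r.
  apply/andP; split; first by apply: divr_ge0; [apply: mulr_ge0; [exact: ler0n | exact: ltW] | exact: ltW].
  rewrite ler_pdivrMr //; have : (i%:R : R) <= n.+1%:R by rewrite ler_nat ltnW.
  have := tau0; nra.
set N := (n.+1%:R : R) in N0 *.
rewrite sumr_const card_ord -mulr_natl -/N.
have -> : tau / N * (N * (K * norm2 w)) = tau * K * norm2 w.
  by field; rewrite gt_eqF.
by [].
Qed.

Lemma tele (y w : V1 * V2) n : 0 <= K ->
  norm2 ((y - T tau y) - RS T tau w n) <=
  tau * K * norm2 ((tau / n.+1%:R)^-1 *: (T (tau / n.+1%:R) y - y) + w).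
Proof.
move=> K0; set d := tau / n.+1%:R.
have N0 : 0 < n.+1%:R :> R by rewrite ltr0n.
have d0 : 0 < d by rewrite divr_gt0.
pose s (i : nat) : R := 0 + i%:R * (tau - 0) / n.+1%:R.
have sE i : s i = i%:R * d by rewrite /s add0r subr0 /d mulrA.
have sS i : s i.+1 = s i + d by rewrite !sE -nat1r mulrDl mul1r addrC.
have s0 i : 0 <= s i by rewrite sE; apply: mulr_ge0; [exact: ler0n | exact: ltW].
pose f (i : nat) := T (s i) y.
have tel : T tau y - y = \sum_(i < n.+1) (f i.+1 - f i).
  rewrite -(big_mkord xpredT (fun i => f i.+1 - f i)) telescope_sumr //.
  by rewrite /f !sE mulr0n mul0r T0 /d mulrC divfK ?gt_eqF.
set Q := d^-1 *: (T d y - y) + w.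
have key : (y - T tau y) - RS T tau w n = - \sum_(i < n.+1) (d *: T (s i) Q).
  rewrite -[y - T tau y]opprB tel /RS -/d.
  have -> : (tau - 0) / n.+1%:R = d by rewrite subr0.
  rewrite scaler_sumr -opprD -big_split /=; congr (- _); apply: eq_bigr => i _.
  rewrite -/(s i) /Q (linD (Tlin (s0 i))) (linZ (Tlin (s0 i))) (linB (Tlin (s0 i))).
  rewrite scalerDr scalerA mulfV ?gt_eqF // scale1r.
  by rewrite /f sS Tadd // ltW.
rewrite key norm2N; apply: (le_trans (norm2_sum _ (fun i : nat => d *: T (s i) Q))).
apply: (@le_trans _ _ (\sum_(i < n.+1) (d * (K * norm2 Q)))).
  apply: ler_sum => i _; rewrite norm2Z ger0_norm; last exact: ltW.
  apply: ler_wpM2l; first exact: ltW.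
  apply: TK; rewrite s0 sE /d mulrA ler_pdivrMr //.
  have : (i%:R : R) <= n.+1%:R by rewrite ler_nat ltnW.
  have := tau0; nra.
rewrite /d; set N := (n.+1%:R : R) in N0 *.
rewrite sumr_const card_ord -mulr_natl -/N.
have -> : N * (tau / N * (K * norm2 Q)) = tau * K * norm2 Q.
  by field; rewrite gt_eqF.
by [].
Qed.

End Tele.
Section G.
Variable (G : zmodType).
Lemma grp_id3 (a b y X Y : G) : (a - y + (X - Y)) - (b - y + X) = (a - b) - Y.
Proof. by rewrite opprD opprB addrACA [a - y + _]addrA subrK [X - Y - X]addrAC subrr add0r. Qed.
Lemma grp_id2 (a b c d : G) : (a - b) - (c - d) = (a - c) - (b - d).
Proof. by rewrite !opprB addrACA [RHS]addrACA [- b - c]addrC. Qed.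
End G.

Section GenSub.
Variable R : realType.
Lemma gen_sub (V : normedModType R) (T : R -> V -> V) (D : set V) (G : V -> V) :
  C0_semigroup T -> generates T D G -> forall a x y, D x -> D y ->
  D (a *: x + y) /\ G (a *: x + y) = a *: G x + G y.
Proof.
move=> hT hG a x y Dx Dy; apply: (gen_dom hG) => e e0.
have a0 : 0 < `|a| + 1 by rewrite ltr_pwDr // normr_ge0.
have ex : 0 < e / (2 * (`|a| + 1)) by rewrite divr_gt0 // mulr_gt0.
have ey : 0 < e / 2 by rewrite divr_gt0.
have [dx dx0 Hx] := gen_rlim hG Dx ex.
have [dy dy0 Hy] := gen_rlim hG Dy ey.
exists (Num.min dx dy); first by rewrite lt_min dx0 dy0.
move=> t /andP[t0]; rewrite lt_min => /andP[tx ty].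
have lt := sg_lin hT (ltW t0).
rewrite (linD lt) (linZ lt).
have -> : a *: T t x + T t y - (a *: x + y) = a *: (T t x - x) + (T t y - y).
  by rewrite scalerBr opprD addrACA.
have -> : t^-1 *: (a *: (T t x - x) + (T t y - y)) - (a *: G x + G y) =
   a *: (t^-1 *: (T t x - x) - G x) + (t^-1 *: (T t y - y) - G y).
  rewrite scalerDr !scalerA mulrC -scalerA.
  by rewrite (scalerBr a) opprD addrACA.
apply: (le_trans (ler_normD _ _)); rewrite normrZ.
have h1 := Hx t; rewrite t0 tx in h1; have {}h1 := h1 isT.
have h2 := Hy t; rewrite t0 ty in h2; have {}h2 := h2 isT.
have h3 : `|a| * `|t^-1 *: (T t x - x) - G x| <= e / 2.
  apply: (le_trans (ler_wpM2l (normr_ge0 a) h1)).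
  rewrite mulrA ler_pdivrMr ?mulr_gt0 //.
  have : `|a| * e <= (`|a| + 1) * e by apply: ler_wpM2r; [exact: ltW | lra].
  have ee : e / 2 * (2 * (`|a| + 1)) = (`|a| + 1) * e by field.
  lra.
lra.
Qed.
End GenSub.
Section Main.
Variables (R : realType) (V1 V2 : completeNormedModType R)
  (D1 : set V1) (A1 : V1 -> V1) (E1 : R -> V1 -> V1)
  (D2 : set V2) (A2 : V2 -> V2) (E2 : R -> V2 -> V2)
  (B1 : V2 -> V1) (B2 : V1 -> V2)
  (Ainv : V1 * V2 -> V1 * V2) (S : R -> V1 * V2 -> V1 * V2).
Hypotheses (hE1 : contraction_C0_semigroup E1) (gE1 : generates E1 D1 (fun x => - A1 x))
  (hE2 : contraction_C0_semigroup E2) (gE2 : generates E2 D2 (fun x => - A2 x))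
  (lB1 : is_linear B1) (bB1 : exists M : R, forall y, `|B1 y| <= M * `|y|)
  (lB2 : is_linear B2) (bB2 : exists M : R, forall x, `|B2 x| <= M * `|x|).
Local Notation DA := [set v : V1 * V2 | D1 v.1 /\ D2 v.2].
Local Notation cA := (fun v : V1 * V2 => (A1 v.1, A2 v.2)).
Local Notation cB := (fun v : V1 * V2 => (B1 v.2, B2 v.1)).
Local Notation E := (fun (t : R) (v : V1 * V2) => (E1 t v.1, E2 t v.2)).
Hypothesis iA : bounded_inverse DA cA Ainv.

Let c1 := hE1.1.
Let c2 := hE2.1.

Lemma A1_lin a x y : D1 x -> D1 y -> D1 (a *: x + y) /\ A1 (a *: x + y) = a *: A1 x + A1 y.
Proof.
move=> Dx Dy; have [h1 h2] := gen_sub c1 gE1 a Dx Dy; split => //.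
by apply: oppr_inj; rewrite h2 scalerN opprD.
Qed.
Lemma A2_lin a x y : D2 x -> D2 y -> D2 (a *: x + y) /\ A2 (a *: x + y) = a *: A2 x + A2 y.
Proof.
move=> Dx Dy; have [h1 h2] := gen_sub c2 gE2 a Dx Dy; split => //.
by apply: oppr_inj; rewrite h2 scalerN opprD.
Qed.

Lemma DA_lin a v w : DA v -> DA w -> DA (a *: v + w) /\ cA (a *: v + w) = a *: cA v + cA w.
Proof.
case: v w => [x1 x2] [y1 y2] [/= Dx1 Dx2] [/= Dy1 Dy2].
have [h1 h2] := A1_lin a Dx1 Dy1; have [k1 k2] := A2_lin a Dx2 Dy2.
by split => //=; rewrite h2 k2.
Qed.

Lemma E_lin t : 0 <= t -> is_linear (E t).
Proof. by move=> t0 a x y /=; rewrite (sg_lin c1 t0) (sg_lin c2 t0). Qed.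
Lemma E_add s t v : 0 <= s -> 0 <= t -> E (s + t) v = E s (E t v).
Proof. by move=> s0 t0 /=; rewrite (sg_add c1) // (sg_add c2). Qed.
Lemma E_zero v : E 0 v = v.
Proof. by case: v => x y /=; rewrite (sg_zero c1) (sg_zero c2). Qed.
Lemma E_contr t v : 0 <= t -> norm2 (E t v) <= norm2 v.
Proof. by move=> t0; apply: norm2_mono => /=; [apply: hE1.2 | apply: hE2.2]. Qed.

Lemma E_comm t v : 0 <= t -> DA v -> DA (E t v) /\ cA (E t v) = E t (cA v).
Proof.
move=> t0 [Dv1 Dv2].
have [h1 h2] := sg_comm gE1 c1 t0 Dv1; have [k1 k2] := sg_comm gE2 c2 t0 Dv2.
split => //=; congr pair.
  by apply: oppr_inj; rewrite h2 (linN (sg_lin c1 t0)).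
by apply: oppr_inj; rewrite k2 (linN (sg_lin c2 t0)).
Qed.

Lemma E_gen v : DA v -> forall e, 0 < e -> exists2 d, 0 < d &
  forall h, 0 < h < d -> norm2 (h^-1 *: (E h v - v) + cA v) <= e.
Proof.
move=> [Dv1 Dv2] e e0; have e2 : 0 < e / 2 by rewrite divr_gt0.
have [d1 d10 H1] := gen_rlim gE1 Dv1 e2; have [d2 d20 H2] := gen_rlim gE2 Dv2 e2.
exists (Num.min d1 d2); first by rewrite lt_min d10 d20.
move=> h /andP[h0]; rewrite lt_min => /andP[hd1 hd2].
apply: (le_trans (norm2_le_sum _)) => /=.
have := H1 h; rewrite h0 hd1 opprK => /(_ isT) a1.
have := H2 h; rewrite h0 hd2 opprK => /(_ isT) a2.
lra.
Qed.

Lemma Ainv_lin : is_linear Ainv.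
Proof. by case: iA => [[]]. Qed.
Lemma Ainv_DA w : DA (Ainv w).
Proof. by case: iA => _ /(_ w) []. Qed.
Lemma Ainv_cA w : cA (Ainv w) = w.
Proof. by case: iA => _ /(_ w) []. Qed.
Lemma Ainv_inv v : DA v -> Ainv (cA v) = v.
Proof. by case: iA => _ _; apply. Qed.
Lemma Ainv_bnd : exists M : R, forall v, norm2 (Ainv v) <= M * norm2 v.
Proof. by case: iA => [[]]. Qed.

Lemma Ainv_E t w : 0 <= t -> Ainv (E t w) = E t (Ainv w).
Proof.
move=> t0; have [h1 h2] := E_comm t0 (Ainv_DA w).
by rewrite Ainv_cA in h2; rewrite -h2 Ainv_inv.
Qed.

Lemma exists_n (tau d : R) : 0 < tau -> 0 < d ->
  exists n : nat, forall m, (n <= m)%N -> tau / m.+1%:R < d.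
Proof.
move=> tau0 d0; exists (Num.truncn (tau / d)) => m nm.
have h := truncnS_gt (tau / d).
have : (Num.truncn (tau / d)).+1%:R <= m.+1%:R :> R by rewrite ler_nat ltnS.
move=> h2; have h3 : tau / d < m.+1%:R by apply: (lt_le_trans h h2).
rewrite ltr_pdivrMr ?ltr0n //; rewrite ltr_pdivrMr // in h3; lra.
Qed.

Lemma E_RS q tau : 0 < tau -> DA q -> forall e, 0 < e -> exists N, forall n, (N <= n)%N ->
  norm2 ((q - E tau q) - RS E tau (cA q) n) <= e.
Proof.
move=> tau0 Dq e e0.
have [d d0 Hd] := E_gen Dq (divr_gt0 e0 tau0).
have [N HN] := exists_n tau0 d0.
exists N => n Nn.
have TK : forall s u, 0 <= s <= tau -> norm2 (E s u) <= 1 * norm2 u.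
  by move=> s u /andP[s0 _]; rewrite mul1r; exact: E_contr.
have h := @tele _ _ _ E tau 1 tau0 E_lin E_add E_zero TK q (cA q) n ler01.
apply: (le_trans h); rewrite mulr1.
have := Hd (tau / n.+1%:R); rewrite divr_gt0 ?ltr0n // HN // => /(_ isT) h2.
have := ler_wpM2l (ltW tau0) h2.
have : tau * (e / tau) = e by field; rewrite gt_eqF.
lra.
Qed.

Lemma E_lip q tau : 0 < tau -> DA q -> norm2 (q - E tau q) <= tau * norm2 (cA q).
Proof.
move=> tau0 Dq; apply/ler_addgt0Pr => e e0.
have [N HN] := E_RS tau0 Dq e0.
have h := HN N (leqnn N).
have TK : forall s u, 0 <= s <= tau -> norm2 (E s u) <= 1 * norm2 u.
  by move=> s u /andP[s0 _]; rewrite mul1r; exact: E_contr.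
have h2 := @RS_bound _ _ _ E tau 1 tau0 TK (cA q) N ler01.
rewrite mulr1 in h2.
have -> : q - E tau q = ((q - E tau q) - RS E tau (cA q) N) + RS E tau (cA q) N by rewrite subrK.
apply: (le_trans (norm2_triangle _ _)); lra.
Qed.


Lemma fst_sumo n (F : 'I_n -> V1 * V2) : (\sum_(i < n) F i).1 = \sum_(i < n) (F i).1.
Proof. by apply: (big_morph fst). Qed.
Lemma snd_sumo n (F : 'I_n -> V1 * V2) : (\sum_(i < n) F i).2 = \sum_(i < n) (F i).2.
Proof. by apply: (big_morph snd). Qed.

Lemma near_inftyP (P : nat -> Prop) :
  (\forall n \near \oo, P n) <-> exists N, forall n, (N <= n)%N -> P n.
Proof. split; [move=> [N _ H]; exists N => n /H // | move=> [N H]; exists N => //]. Qed.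

Lemma Xop_id v tau : 0 < tau ->
  Xop E1 B1 tau v.2 = (Ainv (cB v) - E tau (Ainv (cB v))).1 /\
  Xop E2 B2 tau v.1 = (Ainv (cB v) - E tau (Ainv (cB v))).2.
Proof.
move=> tau0.
set q := Ainv (cB v).
have Dq := Ainv_DA (cB v).
have cq : cA q = cB v := Ainv_cA (cB v).
have H := E_RS tau0 Dq.
split.
- rewrite /Xop /Rint; apply: cvg_lim => //.
  apply/cvgrPdist_le => e e0; have [N HN] := H e e0.
  apply/near_inftyP; exists N => n Nn.
  have h := HN n Nn; rewrite cq in h.
  apply: (le_trans _ h); apply: le_trans (norm2_ge1 _).
  rewrite le_eqVlt; apply/orP; left; apply/eqP; congr (Num.norm _); rewrite /RS /= fst_sumo.
  by [].
- rewrite /Xop /Rint; apply: cvg_lim => //.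
  apply/cvgrPdist_le => e e0; have [N HN] := H e e0.
  apply/near_inftyP; exists N => n Nn.
  have h := HN n Nn; rewrite cq in h.
  apply: (le_trans _ h); apply: le_trans (norm2_ge2 _).
  rewrite le_eqVlt; apply/orP; left; apply/eqP; congr (Num.norm _); rewrite /RS /= snd_sumo.
  by [].
Qed.

Lemma cB_lin : is_linear cB.
Proof. by move=> a x y /=; rewrite lB1 lB2. Qed.

Lemma cB_bnd : exists M : R, forall v, norm2 (cB v) <= M * norm2 v.
Proof.
have [M1 h1] := bB1; have [M2 h2] := bB2.
exists (`|M1| + `|M2|) => v /=.
apply: (le_trans (norm2_le_sum _)) => /=.
have k1 : `|B1 v.2| <= `|M1| * norm2 v.
  apply: (le_trans (h1 _)); apply: (@le_trans _ _ (`|M1| * `|v.2|)).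
    by apply: ler_wpM2r; [exact: normr_ge0 | exact: ler_norm].
  by apply: ler_wpM2l; [exact: normr_ge0 | exact: norm2_ge2].
have k2 : `|B2 v.1| <= `|M2| * norm2 v.
  apply: (le_trans (h2 _)); apply: (@le_trans _ _ (`|M2| * `|v.1|)).
    by apply: ler_wpM2r; [exact: normr_ge0 | exact: ler_norm].
  by apply: ler_wpM2l; [exact: normr_ge0 | exact: norm2_ge1].
lra.
Qed.

Definition bB := opnorm2 cB.
Definition cAB := opnorm2 (fun v => Ainv (cB v)).
Definition aA := opnorm2 Ainv.

Lemma b_prop : 0 <= bB /\ forall v, norm2 (cB v) <= bB * norm2 v.
Proof. exact: opnorm2_prop cB_lin cB_bnd. Qed.
Lemma a_prop : 0 <= aA /\ forall v, norm2 (Ainv v) <= aA * norm2 v.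
Proof. exact: opnorm2_prop Ainv_lin Ainv_bnd. Qed.

Lemma AcB_lin : is_linear (fun v => Ainv (cB v)).
Proof. move=> a x y; have := cB_lin a x y; move=> /= ->; exact: Ainv_lin. Qed.

Lemma c_prop : 0 <= cAB /\ forall v, norm2 (Ainv (cB v)) <= cAB * norm2 v.
Proof.
apply: opnorm2_prop; first exact: AcB_lin.
exists (aA * bB) => v; apply: (le_trans (a_prop.2 _)).
rewrite -mulrA; apply: ler_wpM2l; first exact: a_prop.1.
exact: b_prop.2.
Qed.

Section Part1.
Variable tau : R.
Hypothesis tau0 : 0 < tau.
Local Notation zz w := (Ainv (cB w) - E tau (Ainv (cB w))).

Lemma zz_norm w : norm2 (zz w) <= tau * (bB * norm2 w).
Proof.
have h := E_lip tau0 (Ainv_DA (cB w)); rewrite Ainv_cA in h.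
apply: (le_trans h); apply: ler_wpM2l; [exact: ltW | exact: b_prop.2].
Qed.

Lemma Ainv_zz w : norm2 (Ainv (zz w)) <= tau * (cAB * norm2 w).
Proof.
rewrite (linB Ainv_lin) Ainv_E; last exact: ltW.
have h := E_lip tau0 (Ainv_DA (Ainv (cB w))); rewrite Ainv_cA in h.
apply: (le_trans h); apply: ler_wpM2l; [exact: ltW | exact: c_prop.2].
Qed.

Lemma part1 v :
  norm2 (Ainv (split_step E1 E2 B1 B2 tau v - v)) <=
  tau * norm2 v * (1 + cAB + cAB * (tau * bB)).
Proof.
case: v => x y.
set w1 : V1 * V2 := (E1 tau x, y).
set w2 : V1 * V2 := (Xop E1 B1 tau y, 0).
have X1y : Xop E1 B1 tau y = (zz w1).1 := (Xop_id w1 tau0).1.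
have X2E : Xop E2 B2 tau (E1 tau x) = (zz w1).2 := (Xop_id w1 tau0).2.
have X2X1 : Xop E2 B2 tau (Xop E1 B1 tau y) = (zz w2).2 := (Xop_id w2 tau0).2.
have X10 : (zz w2).1 = 0.
  rewrite -(Xop_id w2 tau0).1 /=.
  have := (Xop_id (0 : V1 * V2) tau0).1.
  have z0 : Ainv (cB 0) = 0.
    have -> : cB 0 = 0 by rewrite /= (lin0 lB1) (lin0 lB2).
    exact: (lin0 Ainv_lin).
  rewrite z0 /= (lin0 (sg_lin c1 (ltW tau0))) subr0; exact.
have X1y' : Xop E1 B1 tau y = (zz (x, y)).1 := (Xop_id (x, y) tau0).1.
have n1 : `|Xop E1 B1 tau y| <= tau * (bB * norm2 (x, y)).
  by rewrite X1y'; apply: le_trans (norm2_ge1 _) (zz_norm _).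
set Z1 := zz w1 in X1y X2E *; set Z2 := zz w2 in X2X1 X10 *.
have ss : split_step E1 E2 B1 B2 tau (x, y) = E tau (x, y) + Z1 + Z2.
  clearbody Z1 Z2; rewrite /split_step /= X2X1 X2E X1y; congr pair => /=.
    by rewrite X10 addr0.
  by rewrite addrC addrA.
have -> : split_step E1 E2 B1 B2 tau (x, y) - (x, y) = (E tau (x, y) - (x, y)) + Z1 + Z2.
  have gen : forall a b c d : V1 * V2, a + b + c - d = a - d + b + c.
    by move=> a b c d; rewrite addrAC (addrAC a).
  by rewrite ss gen.
have t1 : norm2 (Ainv (E tau (x, y) - (x, y))) <= tau * norm2 (x, y).
  rewrite (linB Ainv_lin) Ainv_E; last exact: ltW.
  rewrite -norm2N opprB.
  have h := E_lip tau0 (Ainv_DA (x, y)); rewrite Ainv_cA in h; exact: h.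
have t2 : norm2 (Ainv Z1) <= tau * (cAB * norm2 w1) by exact: Ainv_zz.
have t3 : norm2 (Ainv Z2) <= tau * (cAB * norm2 w2) by exact: Ainv_zz.
clearbody Z1 Z2; rewrite (linD Ainv_lin) (linD Ainv_lin).
have nw1 : norm2 w1 <= norm2 (x, y) by apply: norm2_mono => //=; apply: hE1.2; exact: ltW.
have nw2 : norm2 w2 <= tau * (bB * norm2 (x, y)).
  apply: le_trans (norm2_le_sum _) _; rewrite /= normr0 addr0; exact: n1.
have c0 := c_prop.1; have b0 := b_prop.1; have nv0 := norm2_ge0 (x, y).
have t2' : norm2 (Ainv Z1) <= tau * (cAB * norm2 (x, y)).
  apply: (le_trans t2); apply: ler_wpM2l; first exact: ltW.
  exact: ler_wpM2l.
have t3' : norm2 (Ainv Z2) <= tau * (cAB * (tau * (bB * norm2 (x, y)))).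
  apply: (le_trans t3); apply: ler_wpM2l; first exact: ltW.
  exact: ler_wpM2l.
apply: (le_trans (norm2_triangle _ _)).
apply: (@le_trans _ _ (norm2 (Ainv (E tau (x, y) - (x, y))) + norm2 (Ainv Z1) + norm2 (Ainv Z2))).
  by rewrite lerD2r; exact: norm2_triangle.
have -> : tau * norm2 (x, y) * (1 + cAB + cAB * (tau * bB)) =
  tau * norm2 (x, y) + tau * (cAB * norm2 (x, y)) + tau * (cAB * (tau * (bB * norm2 (x, y)))) by ring.
lra.
Qed.

End Part1.

Local Notation cC := (fun v : V1 * V2 => cA v - cB v).
Hypotheses (hS : C0_semigroup S) (gS : generates S DA (fun v => - cC v)).

Lemma DA_sub p q : DA p -> DA q -> DA (p - q) /\ cA (p - q) = cA p - cA q.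
Proof.
move=> Dp Dq; have [h1 h2] := DA_lin (-1) Dq Dp.
have e : (-1) *: q + p = p - q by rewrite scaleN1r addrC.
rewrite e in h1 h2; split => //; rewrite h2 scaleN1r addrC //.
Qed.

Lemma cC_sub p q : DA p -> DA q -> cC (p - q) = cC p - cC q.
Proof.
move=> Dp Dq; have [_ h] := DA_sub Dp Dq.
have hb : cB (p - q) = cB p - cB q by exact: (linB cB_lin).
rewrite /= in h hb *; rewrite h hb; exact: grp_id2.
Qed.

Lemma S_comm t y : 0 <= t -> DA y -> DA (S t y) /\ cC (S t y) = S t (cC y).
Proof.
move=> t0 Dy; have [h1 h2] := sg_comm gS hS t0 Dy; split => //.
by apply: oppr_inj; rewrite h2 (linN (sg_lin hS t0)).
Qed.

Lemma pair_ext (p q : V1 * V2) : p.1 = q.1 -> p.2 = q.2 -> p = q.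
Proof. by case: p q => ? ? [? ?] /= -> ->. Qed.

Lemma pair_norm (p : V1 * V2) : `|p| = Num.max `|p.1| `|p.2|.
Proof. by []. Qed.

Lemma S_loc : exists2 d : R, 0 < d & exists M : R, forall t u, 0 <= t <= d -> `|S t u| <= M * `|u|.
Proof.
apply: contrapT => H.
have H' : forall n : nat, exists t : R, 0 <= t <= n.+1%:R^-1 /\
    exists u, n.+1%:R * `|u| < `|S t u|.
  move=> n; apply: contrapT => Hn; apply: H; exists n.+1%:R^-1.
    by rewrite invr_gt0 ltr0n.
  exists n.+1%:R => t u tI; rewrite leNgt; apply/negP => hu.
  by apply: Hn; exists t; split => //; exists u.
have [f hf] := choice H'.
pose F1 := [set g : V1 -> V1 * V2 | exists n, g = fun x => S (f n) (x, 0)].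
pose F2 := [set g : V2 -> V1 * V2 | exists n, g = fun x => S (f n) (0, x)].
have f0 n : 0 <= f n by case: (hf n) => /andP[].
have SL n := sg_lin hS (f0 n).
have lin1 : forall g, F1 g -> bounded_fun_norm g /\ linear g.
  move=> g [n ->]; split.
    move=> r; have [M M0 HM] := sg_bnd hS (f0 n); exists (M * `|r|) => x xr.
    apply: (le_trans (HM _)); apply: ler_wpM2l; first exact: ltW.
    rewrite pair_norm /= normr0 ge_max normr_ge0 ?andbT /=; exact: le_trans xr (ler_norm r).
  move=> a x y /=; rewrite -(SL n); congr (S _ _).
  by apply: pair_ext => /=; rewrite ?scaler0 ?addr0.
have lin2 : forall g, F2 g -> bounded_fun_norm g /\ linear g.
  move=> g [n ->]; split.
    move=> r; have [M M0 HM] := sg_bnd hS (f0 n); exists (M * `|r|) => x xr.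
    apply: (le_trans (HM _)); apply: ler_wpM2l; first exact: ltW.
    rewrite pair_norm /= normr0 ge_max normr_ge0 ?andbT /=; exact: le_trans xr (ler_norm r).
  move=> a x y /=; rewrite -(SL n); congr (S _ _).
  by apply: pair_ext => /=; rewrite ?scaler0 ?addr0.
have pb : forall w : V1 * V2, exists M, forall n, `|S (f n) w| <= M.
  move=> w; have [d d0 Hd] := sg_cont hS w ltr01.
  have [N HN] := exists_n ltr01 d0.
  exists (`|w| + 1 + \sum_(i < N) `|S (f i) w|) => n.
  have s0 : 0 <= \sum_(i < N) `|S (f i) w| by apply: sumr_ge0 => i _; exact: normr_ge0.
  case: (leqP N n) => nN.
  - have fd : f n < d.
      case: (hf n) => /andP[_ fn] _; apply: (le_lt_trans fn).
      by have := HN n nN; rewrite mul1r.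
    case: (ltrgt0P (f n)) => [fp|fn|fz].
    + have := Hd (f n); rewrite fp fd => /(_ isT) h.
      have : `|S (f n) w| <= `|S (f n) w - w| + `|w|.
        by apply: le_trans (ler_normD _ _); rewrite subrK.
      lra.
    + by have := f0 n; rewrite leNgt fn.
    + rewrite fz (sg_zero hS); lra.
  - have : `|S (f n) w| <= \sum_(i < N) `|S (f i) w|.
      by rewrite (bigD1 (Ordinal nN)) //= lerDl; apply: sumr_ge0 => i _; exact: normr_ge0.
    have := normr_ge0 w; lra.
have pw1 : pointwise_bounded F1.
  move=> x; have [M HM] := pb (x, 0); exists M => g [n ->]; exact: HM.
have pw2 : pointwise_bounded F2.
  move=> x; have [M HM] := pb (0, x); exists M => g [n ->]; exact: HM.
have [M1 HM1] := Banach_Steinhauss lin1 pw1 1.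
have [M2 HM2] := Banach_Steinhauss lin2 pw2 1.
have Ub : forall n u, `|S (f n) u| <= (M1 + M2) * `|u|.
  move=> n u; have [->|u0] := eqVneq u 0.
    by rewrite (lin0 (SL n)) !normr0 mulr0.
  have up : 0 < `|u| by rewrite normr_gt0.
  set u' := `|u|^-1 *: u.
  have nu' : `|u'| = 1 by rewrite normrZ normrV ?unitfE ?normr_eq0 // normr_id mulVf ?normr_eq0.
  have eu : u = `|u| *: u' by rewrite /u' scalerA mulfV ?normr_eq0 // scale1r.
  rewrite [X in S _ X]eu (linZ (SL n)) normrZ normr_id mulrC; apply: ler_wpM2r; first exact: ltW.
  have eu' : u' = (u'.1, 0) + (0, u'.2) by apply: pair_ext => /=; rewrite ?addr0 ?add0r.
  rewrite [X in S _ X]eu' (linD (SL n)); apply: (le_trans (ler_normD _ _)); apply: lerD.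
    apply: (HM1 (fun x => S (f n) (x, 0))); first by exists n.
    by apply: le_trans (_ : `|u'| <= 1); [rewrite pair_norm le_max lexx | rewrite nu'].
  apply: (HM2 (fun x => S (f n) (0, x))); first by exists n.
  by apply: le_trans (_ : `|u'| <= 1); [rewrite pair_norm le_max lexx orbT | rewrite nu'].
pose n := Num.truncn (M1 + M2).
have hn : M1 + M2 < n.+1%:R by exact: truncnS_gt.
have [_ [u hu]] := hf n.
have := Ub n u; have := normr_ge0 u; nra.
Qed.

Lemma S_bndT (T : R) : 0 <= T -> exists2 K : R, 0 < K &
  forall t u, 0 <= t <= T -> norm2 (S t u) <= K * norm2 u.
Proof.
move=> T0; have [d d0 [M HM]] := S_loc.
set M' := Num.max M 1.
have M1 : 1 <= M' by rewrite le_max lexx orbT.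
have M'0 : 0 < M' by lra.
have HM' : forall t u, 0 <= t <= d -> `|S t u| <= M' * `|u|.
  move=> t u tI; apply: (le_trans (HM t u tI)); apply: ler_wpM2r; first exact: normr_ge0.
  by rewrite le_max lexx.
have ind : forall k : nat, forall t u, 0 <= t <= k.+1%:R * d -> `|S t u| <= M' ^+ k.+1 * `|u|.
  elim=> [|k IH] t u /andP[t0 tk].
  - by rewrite expr1; apply: HM'; rewrite t0 /=; rewrite mul1r in tk.
  - case: (lerP t d) => td.
    + apply: (le_trans (HM' t u (andPi t0 td))); apply: ler_wpM2r; first exact: normr_ge0.
      rewrite exprS -[X in X <= _]mulr1; apply: ler_wpM2l; first lra.
      exact: exprn_ege1.
    + have tdp : 0 <= t - d by lra.
      have eS : S t u = S d (S (t - d) u) by rewrite -(sg_add hS u (ltW d0) tdp) addrC subrK.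
      rewrite eS; apply: (le_trans (HM' _ _ (andPi (ltW d0) (lexx d)))).
      rewrite exprS -mulrA; apply: ler_wpM2l; first lra.
      apply: IH; rewrite tdp /=.
      have : k.+2%:R = k.+1%:R + 1 :> R by rewrite -natr1.
      move=> e2; rewrite e2 in tk; lra.
pose k := Num.truncn (T / d).
have hk : T / d < k.+1%:R by exact: truncnS_gt.
have Tk : T <= k.+1%:R * d by rewrite ltr_pdivrMr // in hk; lra.
exists (2 * M' ^+ k.+1); first by rewrite mulr_gt0 // exprn_gt0.
move=> t u /andP[t0 tT].
apply: (le_trans (norm2_le_norm _)).
have h := ind k t u (andPi t0 (le_trans tT Tk)).
have Mk : 0 <= M' ^+ k.+1 by rewrite exprn_ge0 // ltW.
have := norm_le_norm2 u; have := normr_ge0 u; nra.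
Qed.

Lemma S_gron x t : DA x -> 0 <= t -> norm2 (S t x) <= expR (t * bB) * norm2 x.
Proof.
move=> Dx t0.
have b0 := b_prop.1.
pose F s := expR (- (s * bB)) * norm2 (S s x) - norm2 x.
have : F t <= 0.
  apply: dini => //.
  - by rewrite /F mul0r oppr0 expR0 mul1r (sg_zero hS) subrr.
  - move=> s /andP[s0 st] e e0.
    have [K K0 HK] := S_bndT t0.
    have eK : 0 < e / (2 * K) by rewrite divr_gt0 // mulr_gt0.
    have [d d0 Hd] := sg_cont hS x eK.
    exists d => // r /andP[rl rs] r0.
    have sr0 : 0 < s - r by rewrite subr_gt0.
    have srd : s - r < d by lra.
    have h1 := Hd (s - r); rewrite sr0 srd in h1; have {}h1 := h1 isT.
    have eS : S s x = S r (S (s - r) x) by rewrite -(sg_add hS x r0 (ltW sr0)) addrC subrK.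
    set diff := norm2 (S s x - S r x).
    have hd : diff <= e.
      rewrite /diff eS -(linB (sg_lin hS r0)).
      apply: (le_trans (HK _ _ _)); first by rewrite r0 /=; lra.
      apply: (@le_trans _ _ (K * (2 * (e / (2 * K))))).
        apply: ler_wpM2l; first exact: ltW.
        apply: (le_trans (norm2_le_norm _)); apply: ler_wpM2l => //.
      have -> : K * (2 * (e / (2 * K))) = e by field; rewrite gt_eqF.
      by [].
    have hN : norm2 (S s x) <= norm2 (S r x) + diff.
      have -> : S s x = S r x + (S s x - S r x) by rewrite addrC subrK.
      exact: norm2_triangle.
    set es := expR (- (s * bB)); set er := expR (- (r * bB)).
    have es0 : 0 <= es by exact: expR_ge0.
    have eser : es <= er by rewrite ler_expR lerN2; apply: ler_wpM2r => //; lra.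
    have es1 : es <= 1 by rewrite -expR0 ler_expR oppr_le0; apply: mulr_ge0; lra.
    have d0' : 0 <= diff by exact: norm2_ge0.
    have Nr0 := norm2_ge0 (S r x).
    have p1 : es * norm2 (S s x) <= es * (norm2 (S r x) + diff) by exact: ler_wpM2l.
    have p2 : es * norm2 (S r x) <= er * norm2 (S r x) by exact: ler_wpM2r.
    have p3 : es * diff <= diff by rewrite -[X in _ <= X]mul1r; exact: ler_wpM2r.
    rewrite /F -/es -/er; lra.
  - move=> s /andP[s0 st] e e0.
    set y := S s x.
    have [Dy _] := S_comm s0 Dx.
    have e1 : 0 < e / 4 by rewrite divr_gt0.
    have [dS dS0 HS] := gen_rlim gS Dy e1.
    have [dE dE0 HE] := E_gen Dy e1.
    exists (Num.min dS dE); first by rewrite lt_min dS0 dE0.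
    move=> h /andP[h0]; rewrite lt_min => /andP[hhS hhE] _.
    have eS : S (s + h) x = S h y by rewrite addrC (sg_add hS) // ltW.
    set rS := h^-1 *: (S h y - y) + cC y.
    set rE := h^-1 *: (E h y - y) + cA y.
    have nS : norm2 rS <= 2 * (e / 4).
      apply: (le_trans (norm2_le_norm _)); apply: ler_wpM2l => //.
      have := HS h; rewrite h0 hhS opprK => /(_ isT); exact.
    have nE : norm2 rE <= e / 4.
      have := HE h; rewrite h0 hhE => /(_ isT); exact.
    have hrS : h *: rS = (S h y - y) + (h *: cA y - h *: cB y).
      by rewrite /rS scalerDr scalerA mulfV ?gt_eqF // scale1r scalerBr.
    have hrE : h *: rE = (E h y - y) + h *: cA y.
      by rewrite /rE scalerDr scalerA mulfV ?gt_eqF // scale1r.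
    have key : S h y = E h y + ((h *: rS - h *: rE) + h *: cB y).
      by rewrite hrS hrE grp_id3 subrK addrC subrK.
    have nSh : norm2 (S h y) <= norm2 y + h * (norm2 rS + norm2 rE) + h * (bB * norm2 y).
      rewrite key; apply: (le_trans (norm2_triangle _ _)).
      have k1 : norm2 (E h y) <= norm2 y by apply: E_contr; exact: ltW.
      have k2 : norm2 (h *: rS - h *: rE) <= h * (norm2 rS + norm2 rE).
        apply: (le_trans (norm2B _ _)); rewrite !norm2Z ger0_norm; last exact: ltW.
        by rewrite mulrDr.
      have k3 : norm2 (h *: cB y) <= h * (bB * norm2 y).
        rewrite norm2Z ger0_norm; last exact: ltW.
        by apply: ler_wpM2l; [exact: ltW | exact: b_prop.2].
      have k4 := norm2_triangle (h *: rS - h *: rE) (h *: cB y).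
      lra.
    rewrite /F eS.
    set es := expR (- (s * bB)).
    have eh : expR (- ((s + h) * bB)) = es * expR (- (h * bB)).
      by rewrite -expRD mulrDl opprD.
    rewrite eh.
    set ex := expR (- (h * bB)).
    have ex0 : 0 <= ex by exact: expR_ge0.
    have es0 : 0 <= es by exact: expR_ge0.
    have es1 : es <= 1 by rewrite -expR0 ler_expR oppr_le0; apply: mulr_ge0; lra.
    have hb0 : 0 <= h * bB by rewrite mulr_ge0 // ltW.
    have ex1 : ex * (1 + h * bB) <= 1.
      rewrite /ex expRN; have := expR_ge1Dx (h * bB); have := expR_gt0 (h * bB).
      move=> p q; rewrite ler_pdivrMl //; lra.
    have ex1' : ex <= 1 by rewrite -expR0 ler_expR oppr_le0.
    have Ny0 := norm2_ge0 y.
    have rr0 : 0 <= norm2 rS + norm2 rE by rewrite addr_ge0 // norm2_ge0.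
    set N' := norm2 (S h y) in nSh *.
    set Ny := norm2 y in nSh Ny0 *.
    have q1 : es * ex * N' <= es * ex * (Ny + h * (norm2 rS + norm2 rE) + h * (bB * Ny)).
      by apply: ler_wpM2l => //; exact: mulr_ge0.
    have q2 : es * ex * (Ny + h * (bB * Ny)) <= es * Ny.
      have -> : es * ex * (Ny + h * (bB * Ny)) = es * Ny * (ex * (1 + h * bB)) by ring.
      rewrite -[X in _ <= X]mulr1; apply: ler_wpM2l => //; exact: mulr_ge0.
    have q3 : es * ex * (h * (norm2 rS + norm2 rE)) <= h * (norm2 rS + norm2 rE).
      rewrite -[X in _ <= X]mul1r; apply: ler_wpM2r; first by rewrite mulr_ge0 // ltW.
      have : es * ex <= es * 1 by exact: ler_wpM2l.
      lra.
    have q4 : h * (norm2 rS + norm2 rE) <= e * h.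
      rewrite mulrC; apply: ler_wpM2r; first exact: ltW.
      lra.
    have : es * ex * (Ny + h * (norm2 rS + norm2 rE) + h * (bB * Ny)) =
      es * ex * (Ny + h * (bB * Ny)) + es * ex * (h * (norm2 rS + norm2 rE)) by ring.
    lra.
rewrite /F => h.
have et : expR (t * bB) * expR (- (t * bB)) = 1 by rewrite -expRD subrr expR0.
have ep := expR_gt0 (t * bB).
have : expR (- (t * bB)) * norm2 (S t x) <= norm2 x by lra.
move=> h2; have := ler_wpM2l (ltW ep) h2.
rewrite mulrA et mul1r; exact.
Qed.

Lemma DA_dense v e : 0 < e -> exists u, DA u /\ norm2 (v - u) <= e.
Proof.
move=> e0; set z := Ainv v.
have Dz : DA z := Ainv_DA v.
have cz : cA z = v := Ainv_cA v.
have [d d0 Hd] := E_gen Dz e0.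
set h := d / 2.
have h0 : 0 < h by rewrite divr_gt0.
have hd : h < d by rewrite /h; lra.
have [DEz _] := E_comm (ltW h0) Dz.
have [Dp _] := DA_sub DEz Dz.
have D0 : DA 0 by have [D00 _] := DA_sub Dz Dz; rewrite subrr in D00.
have [Du _] := DA_lin (- h^-1) Dp D0.
exists ((- h^-1) *: (E h z - z) + 0); split => //.
have := Hd h; rewrite h0 hd => /(_ isT).
rewrite cz addr0 scaleNr opprK addrC; exact.
Qed.

Lemma S_exp v t : 0 <= t -> norm2 (S t v) <= expR (t * bB) * norm2 v.
Proof.
move=> t0; apply/ler_addgt0Pr => e e0.
have [M M0 HM] := sg_bnd hS t0.
set ex := expR (t * bB).
have ex0 : 0 < ex by exact: expR_gt0.
have k0 : 0 < ex + 2 * M by lra.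
set dl := e / (ex + 2 * M).
have dl0 : 0 < dl by rewrite divr_gt0.
have [u [Du hu]] := DA_dense v dl0.
have h1 := S_gron Du t0; rewrite -/ex in h1.
have h2 : norm2 (S t (v - u)) <= 2 * M * norm2 (v - u).
  apply: (le_trans (norm2_le_norm _)).
  have := HM (v - u).
  have : M * `|v - u| <= M * norm2 (v - u) by apply: ler_wpM2l; [exact: ltW | exact: norm_le_norm2].
  lra.
have eS : S t v = S t u + S t (v - u) by rewrite -(linD (sg_lin hS t0)) addrC subrK.
have eu : v - (v - u) = u by rewrite opprB addrC subrK.
have nu : norm2 u <= norm2 v + dl by have := norm2B v (v - u); rewrite eu; lra.
have h3 : ex * norm2 u <= ex * (norm2 v + dl) by apply: ler_wpM2l => //; exact: ltW.
have h4 : 2 * M * norm2 (v - u) <= 2 * M * dl by apply: ler_wpM2l => //; lra.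
have h5 : (ex + 2 * M) * dl = e by rewrite /dl; field; rewrite gt_eqF.
rewrite eS; apply: (le_trans (norm2_triangle _ _)).
lra.
Qed.

Lemma S_lip y tau : 0 < tau -> DA y ->
  norm2 (y - S tau y) <= tau * expR (tau * bB) * norm2 (cC y).
Proof.
move=> tau0 Dy; set K := expR (tau * bB).
have K0 : 0 < K by exact: expR_gt0.
have TK : forall s u, 0 <= s <= tau -> norm2 (S s u) <= K * norm2 u.
  move=> s u /andP[s0 st]; apply: (le_trans (S_exp u s0)).
  apply: ler_wpM2r; first exact: norm2_ge0.
  rewrite ler_expR; apply: ler_wpM2r => //; exact: b_prop.1.
apply/ler_addgt0Pr => e e0.
have k1 : 0 < 2 * tau * K + 1 by have := mulr_gt0 tau0 K0; lra.
have e1 : 0 < e / (2 * tau * K + 1) by rewrite divr_gt0.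
have [d d0 Hd] := gen_rlim gS Dy e1.
have [N HN] := exists_n tau0 d0.
have h := @tele _ _ _ S tau K tau0 (fun s s0 => sg_lin hS s0)
  (fun s t x s0 t0 => sg_add hS x s0 t0) (sg_zero hS) TK y (cC y) N (ltW K0).
have hr := @RS_bound _ _ _ S tau K tau0 TK (cC y) N (ltW K0).
set q := (tau / N.+1%:R)^-1 *: (S (tau / N.+1%:R) y - y) in h.
have hq : norm2 (q + cC y) <= 2 * (e / (2 * tau * K + 1)).
  apply: (le_trans (norm2_le_norm _)); apply: ler_wpM2l => //.
  have := Hd (tau / N.+1%:R); rewrite divr_gt0 ?ltr0n // HN // opprK => /(_ isT); exact.
have eq1 : y - S tau y = ((y - S tau y) - RS S tau (cC y) N) + RS S tau (cC y) N by rewrite subrK.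
rewrite eq1; apply: (le_trans (norm2_triangle _ _)).
have tK0 : 0 <= tau * K by rewrite mulr_ge0 // ltW.
have h6 : tau * K * norm2 (q + cC y) <= tau * K * (2 * (e / (2 * tau * K + 1))).
  by apply: ler_wpM2l.
have h7 : tau * K * (2 * (e / (2 * tau * K + 1))) <= e.
  have hw : e / (2 * tau * K + 1) * (2 * tau * K + 1) = e by field; rewrite gt_eqF.
  set w := e / (2 * tau * K + 1) in e1 hw *.
  nra.
lra.
Qed.

Hypothesis iC : exists Cinv, bounded_inverse DA cC Cinv.

Lemma part2 tau v : 0 < tau ->
  norm2 (Ainv (S tau v - v)) <= (1 + cAB) * (tau * expR (tau * bB) * norm2 v).
Proof.
move=> tau0; have [Cinv [_ hC1 _]] := iC.
have [Dy cy] := hC1 v.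
set y := Cinv v in Dy cy.
have [DSy cSy] := S_comm (ltW tau0) Dy.
have [Dd _] := DA_sub DSy Dy.
set d := S tau y - y in Dd.
have e1 : S tau v - v = cC d by rewrite /d (cC_sub DSy Dy) cSy cy.
have e2 : Ainv (cC d) = d - Ainv (cB d).
  by rewrite (linB Ainv_lin) (Ainv_inv Dd).
rewrite e1 e2; apply: (le_trans (norm2B _ _)).
have nd : norm2 d <= tau * expR (tau * bB) * norm2 v.
  by rewrite /d -norm2N opprB -[X in _ <= _ * norm2 X]cy; exact: S_lip.
have := c_prop.2 d; have := c_prop.1; have := norm2_ge0 d; nra.
Qed.

Lemma final tau : 0 < tau ->
  opnorm2 (fun v => Ainv (split_step E1 E2 B1 B2 tau v - S tau v))
    <= (2 + 3 * `|cAB|) * (1 + expR (tau * bB)) * tau.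
Proof.
move=> tau0; apply: opnorm2_ub => v nv.
have p1 := part1 tau0 v.
have p2 := part2 v tau0.
have e : split_step E1 E2 B1 B2 tau v - S tau v =
  (split_step E1 E2 B1 B2 tau v - v) - (S tau v - v).
  by rewrite opprB addrA subrK.
rewrite e (linB Ainv_lin); apply: (le_trans (norm2B _ _)).
have c0 := c_prop.1; have b0 := b_prop.1.
have cc : `|cAB| = cAB by rewrite ger0_norm.
rewrite cc.
set ex := expR (tau * bB) in p2 *.
have ex1 : 1 + tau * bB <= ex by exact: expR_ge1Dx.
have nv0 := norm2_ge0 v.
have tb0 : 0 <= tau * bB by rewrite mulr_ge0 // ltW.
set n := norm2 v in nv nv0 p1 p2.
set a1 := norm2 (Ainv (split_step E1 E2 B1 B2 tau v - v)) in p1 *.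
set a2 := norm2 (Ainv (S tau v - v)) in p2 *.
have q1 : tau * n * (1 + cAB + cAB * (tau * bB)) <= tau * (1 + cAB + cAB * ex).
  apply: (@le_trans _ _ (tau * 1 * (1 + cAB + cAB * (tau * bB)))).
    apply: ler_wpM2r; first by rewrite !addr_ge0 // mulr_ge0.
    by apply: ler_wpM2l => //; exact: ltW.
  rewrite mulr1; apply: ler_wpM2l; first exact: ltW.
  by rewrite lerD2l; apply: ler_wpM2l => //; lra.
have q2 : (1 + cAB) * (tau * ex * n) <= (1 + cAB) * (tau * ex).
  apply: ler_wpM2l; first lra.
  rewrite -[X in _ <= X]mulr1; apply: ler_wpM2l => //.
  by apply: mulr_ge0; [exact: ltW | exact: expR_ge0].
have : tau * (1 + cAB + cAB * ex) + (1 + cAB) * (tau * ex) <= (2 + 3 * cAB) * (1 + ex) * tau.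
  have ex0 : 0 <= ex by exact: expR_ge0.
  have : 0 <= tau * cAB by rewrite mulr_ge0 // ltW.
  have : 0 <= tau * cAB * ex by rewrite !mulr_ge0 // ltW.
  have : 0 <= tau * ex by rewrite mulr_ge0 // ltW.
  have : (2 + 3 * cAB) * (1 + ex) * tau - (tau * (1 + cAB + cAB * ex) + (1 + cAB) * (tau * ex))
    = tau + tau * ex + 2 * (tau * cAB) + tau * cAB * ex by ring.
  lra.
lra.
Qed.

End Main.

Unset Implicit Arguments.

Theorem lemma4p2 (R : realType) :
  exists C2 : R -> R -> R, (forall a b, 0 < C2 a b) /\
  forall (V1 V2 : completeNormedModType R)
    (D1 : set V1) (A1 : V1 -> V1) (E1 : R -> V1 -> V1)
    (D2 : set V2) (A2 : V2 -> V2) (E2 : R -> V2 -> V2)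
    (B1 : V2 -> V1) (B2 : V1 -> V2)
    (Ainv : V1 * V2 -> V1 * V2) (S : R -> V1 * V2 -> V1 * V2),
    contraction_C0_semigroup E1 -> generates E1 D1 (fun x => - A1 x) ->
    contraction_C0_semigroup E2 -> generates E2 D2 (fun x => - A2 x) ->
    is_linear B1 -> (exists M : R, forall y, `|B1 y| <= M * `|y|) ->
    is_linear B2 -> (exists M : R, forall x, `|B2 x| <= M * `|x|) ->
    let DA := [set v : V1 * V2 | D1 v.1 /\ D2 v.2] in
    let cA := fun v : V1 * V2 => (A1 v.1, A2 v.2) in
    let cB := fun v : V1 * V2 => (B1 v.2, B2 v.1) in
    let cC := fun v : V1 * V2 => cA v - cB v in
    bounded_inverse DA cA Ainv ->
    (exists Cinv, bounded_inverse DA cC Cinv) ->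
    C0_semigroup S -> generates S DA (fun v => - cC v) ->
    forall tau : R, 0 < tau ->
      opnorm2 (fun v => Ainv (split_step E1 E2 B1 B2 tau v - S tau v))
      <= C2 (opnorm2 Ainv) (opnorm2 (fun v => Ainv (cB v)))
           * (1 + expR (tau * opnorm2 cB)) * tau.
Proof.
exists (fun a c => 2 + 3 * `|c|); split.
  by move=> a c; have := normr_ge0 c; lra.
move=> V1 V2 D1 A1 E1 D2 A2 E2 B1 B2 Ainv S hE1 gE1 hE2 gE2 lB1 bB1 lB2 bB2 DA cA cB cC iA iC hS gS tau tau0.
exact: (final hE1 gE1 hE2 gE2 lB1 bB1 lB2 bB2 iA hS gS iC tau0).
Qed.
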